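(* Let $A\in\mathbb{R}^{n\times n}$ be nonsingular. Let $A=U-V$ be a convergent regular splitting and let $U=F-G$ be a convergent weak regular splitting of type II such that $VF^{-1}G=GF^{-1}V$. Then the stationary two-stage iterative method is convergent for any initial vector $x_0$; that is, for every positive integer $s$, the matrix $$T_{s}=(F^{-1}G)^{s}+\sum_{j=0}^{s-1}(F^{-1}G)^{j}F^{-1}V$$ satisfies $\rho(T_s)<1$, so that the iterates $x_{k+1}=T_s x_k + \sum_{j=0}^{s-1}(F^{-1}G)^jF^{-1}b$ converge to $A^{-1}b$ for every $x_0$ and every $b$.
   Context: Inequalities between matrices are entrywise. A splitting $A=U-V$ with $U$ nonsingular is regular if $U^{-1}\geq 0$ and $V\geq 0$; it is weak regular of type II if $U^{-1}\geq 0$ and $VU^{-1}\geq 0$. A splitting is convergent if $\rho(U^{-1}V)<1$, where $\rho$ denotes spectral radius. The stationary two-stage method for $Ax=b$ uses outer splitting $A=U-V$ and inner splitting $U=F-G$ with a fixed number $s\ge1$ of inner iterations. *)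

(* Defs.v *)
From HB Require Import structures.
From mathcomp Require Import all_boot all_order all_algebra.
From mathcomp Require Import complex.
From mathcomp Require Import all_classical all_reals all_analysis.
Set Implicit Arguments. Unset Strict Implicit. Unset Printing Implicit Defensive.
Import Order.TTheory GRing.Theory Num.Theory.
Local Open Scope ring_scope.

Definition mx_nonneg (R : realType) (m n : nat) (M : 'M[R]_(m, n)) : Prop :=
  forall i j, 0 <= M i j.

Definition eigenvalues (R : realType) (n : nat) (M : 'M[R]_n) : seq R[i] :=
  sval (closed_field_poly_normal
          (char_poly (map_mx (fun x : R => (x%:C)%C) M))).

Definition spectral_radius (R : realType) (n : nat) (M : 'M[R]_n) : R :=
  \big[Num.max/0]_(z <- eigenvalues M) ComplexField.Normc.normc z.

Definition regular_splitting (R : realType) (n : nat) (A U V : 'M[R]_n) : Prop :=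
  [/\ A = U - V, U \in unitmx, mx_nonneg (invmx U) & mx_nonneg V].

Definition weak_regular_splitting_II (R : realType) (n : nat) (A U V : 'M[R]_n) : Prop :=
  [/\ A = U - V, U \in unitmx, mx_nonneg (invmx U) & mx_nonneg (V *m invmx U)].

Definition convergent_splitting (R : realType) (n : nat) (U V : 'M[R]_n) : Prop :=
  spectral_radius (invmx U *m V) < 1.

Definition two_stage_T (R : realType) (n : nat) (V F G : 'M[R]_n) (s : nat) : 'M[R]_n :=
  (invmx F *m G) ^+ s + \sum_(j < s) ((invmx F *m G) ^+ j *m invmx F *m V).

Definition two_stage_c (R : realType) (n : nat) (F G : 'M[R]_n) (s : nat)
    (b : 'cV[R]_n) : 'cV[R]_n :=
  \sum_(j < s) ((invmx F *m G) ^+ j *m invmx F *m b).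

Fixpoint two_stage_iter (R : realType) (n : nat) (V F G : 'M[R]_n) (s : nat)
    (b x0 : 'cV[R]_n) (k : nat) : 'cV[R]_n :=
  match k with
  | 0 => x0
  | k'.+1 => two_stage_T V F G s *m two_stage_iter V F G s b x0 k'
             + two_stage_c F G s b
  end.

(* Main.v *)
Require Import Defs.
From HB Require Import structures.
From mathcomp Require Import all_boot all_order all_algebra.
From mathcomp Require Import complex.
From mathcomp Require Import all_classical all_reals all_analysis.
From mathcomp Require Import ring lra.
Import Order.TTheory GRing.Theory Num.Theory.
Import numFieldNormedType.Exports.
Local Open Scope classical_set_scope.
Local Open Scope ring_scope.
Section Null.
Context {R : realType}.

Definition null (f : nat -> R) :=
  forall e : R, 0 < e -> exists N, forall k, (N <= k)%N -> `|f k| < e.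

Lemma null_cvg (f : nat -> R) (l : R) :
  null (fun k => f k - l) -> f @ \oo --> l.
Proof.
move=> H; apply/cvgrPdist_lt => e e0.
have [N HN] := H e e0.
exists N => // k /= Nk; rewrite distrC; exact: HN.
Qed.

Lemma null_geo (q : R) : 0 <= q -> q < 1 -> null (fun k => q ^+ k).
Proof.
move=> q0 q1 e e0.
have := @cvg_expr R q; rewrite ger0_norm // => /(_ q1).
move/cvgrPdist_lt => /(_ e e0) [N _ HN].
exists N => k Nk; have := HN k Nk; by rewrite sub0r normrN.
Qed.

Lemma null0 : null (fun _ => 0).
Proof. by move=> e e0; exists 0%N => k _; rewrite normr0. Qed.

Lemma null_le (f g : nat -> R) : null g -> (forall k, `|f k| <= `|g k|) -> null f.
Proof.
move=> H L e e0; have [N HN] := H e e0; exists N => k Nk.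
exact: le_lt_trans (L k) (HN k Nk).
Qed.

Lemma nullD (f g : nat -> R) : null f -> null g -> null (fun k => f k + g k).
Proof.
move=> Hf Hg e e0.
have e2 : 0 < e / 2 by rewrite divr_gt0.
have [N1 H1] := Hf _ e2; have [N2 H2] := Hg _ e2.
exists (maxn N1 N2) => k; rewrite geq_max => /andP[k1 k2].
apply: le_lt_trans (ler_normD _ _) _.
by rewrite (splitr e) ltrD // ?H1 ?H2.
Qed.

Lemma nullZ (c : R) (f : nat -> R) : null f -> null (fun k => c * f k).
Proof.
move=> Hf e e0.
have e2 : 0 < e / (`|c| + 1) by rewrite divr_gt0 // ltr_wpDl.
have [N HN] := Hf _ e2; exists N => k Nk.
rewrite normrM.
have c1 : 0 < `|c| + 1 by rewrite ltr_wpDl.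
apply: (@le_lt_trans _ _ ((`|c| + 1) * `|f k|)).
  by rewrite ler_wpM2r // lerDl.
by rewrite mulrC -ltr_pdivlMr //; exact: HN.
Qed.

Lemma null_sum (I : Type) (r : seq I) (F : I -> nat -> R) :
  (forall i, null (F i)) -> null (fun k => \sum_(i <- r) F i k).
Proof.
move=> H; elim: r => [|a r IH].
  apply: (@null_le _ (fun _ => 0)); first exact: null0.
  by move=> k; rewrite big_nil.
move=> e e0; have [N HN] := nullD _ _ (H a) IH e e0.
by exists N => k Nk; rewrite big_cons; exact: HN.
Qed.

Lemma null_const (c : R) : null (fun _ => c) -> c = 0.
Proof.
move=> H; apply/eqP; apply: contraT => c0.
have [N HN] := H `|c| (ltac:(by rewrite normr_gt0)).
by have := HN N (leqnn N); rewrite ltxx.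
Qed.

Lemma null_lb (a : R) (f : nat -> R) : null f -> (forall k, a <= f k) -> a <= 0.
Proof.
move=> H L; rewrite leNgt; apply/negP => a0.
have [N HN] := H a a0.
have := HN N (leqnn N); have := L N => h1 h2.
have := le_lt_trans h1 (le_lt_trans (ler_norm _) h2); by rewrite ltxx.
Qed.

Lemma null_rec (a b : nat -> R) (q : R) : 0 <= q -> q < 1 ->
  (forall k, 0 <= a k) -> null b -> (forall k, a k.+1 <= q * a k + b k) -> null a.
Proof.
move=> q0 q1 a0 Hb Hr e e0.
have q1' : 0 < 1 - q by rewrite subr_gt0.
have d0 : 0 < e * (1 - q) / 2 by rewrite divr_gt0 // mulr_gt0.
have [N HN] := Hb _ d0.
have Hm : forall m, a (N + m)%N <= q ^+ m * a N + e / 2.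
  elim=> [|m IH]; first by rewrite addn0 expr0 mul1r lerDl divr_ge0 // ltW.
  rewrite addnS; apply: le_trans (Hr _) _.
  have bb : b (N + m)%N <= e * (1 - q) / 2.
    apply: le_trans (ler_norm _) _; apply: ltW; apply: HN; exact: leq_addr.
  apply: le_trans (lerD (ler_wpM2l q0 IH) bb) _.
  rewrite exprS -mulrA le_eqVlt; apply/orP; left; apply/eqP.
  by field; rewrite ?pnatr_eq0.
have aN0 : 0 <= a N := a0 N.
have e2 : 0 < e / 2 by rewrite divr_gt0.
have [M HM] := null_geo q q0 q1 (e / 2 / (a N + 1)) (divr_gt0 e2 (ltr_wpDl aN0 ltr01)).
exists (N + M)%N => k Nk.
have -> : k = (N + (k - N))%N by rewrite subnKC // (leq_trans (leq_addr M N)).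
rewrite ger0_norm //.
apply: le_lt_trans (Hm _) _.
have hM : `|q ^+ (k - N)| < e / 2 / (a N + 1) by apply: HM; rewrite leq_subRL ?(leq_trans (leq_addr M N)).
rewrite ger0_norm ?exprn_ge0 // in hM.
have aN1 : 0 < a N + 1 by rewrite ltr_wpDl.
rewrite ltr_pdivlMr // in hM.
apply: (@le_lt_trans _ _ (q ^+ (k - N) * (a N + 1) + e / 2)).
  by rewrite lerD2r ler_wpM2l ?exprn_ge0 // lerDl.
move: hM; set X := q ^+ (k - N) * (a N + 1) => hM; lra.
Qed.

End Null.

Lemma null_ext {R : realType} (f g : nat -> R) : (forall k, f k = g k) -> null f -> null g.
Proof. by move=> E H e e0; have [N HN] := H e e0; exists N => k Nk; rewrite -E; exact: HN. Qed.

Lemma null_abs {R : realType} (f : nat -> R) : null (fun k => `|f k|) -> null f.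
Proof. by move=> H e e0; have [N HN] := H e e0; exists N => k Nk; have := HN k Nk; rewrite normr_id. Qed.
Notation nc := ComplexField.Normc.normc.

Section Cplx.
Context {R : realType}.

Lemma nc_ge0 (z : R[i]) : 0 <= nc z.
Proof. by case: z => a b; rewrite /= sqrtr_ge0. Qed.

Lemma nc_real (x : R) : nc (x%:C)%C = `|x|.
Proof. by rewrite /= expr0n /= addr0 sqrtr_sqr. Qed.

Lemma nc_gt0 (z : R[i]) : z != 0 -> 0 < nc z.
Proof.
move=> z0; rewrite lt_def nc_ge0 andbT; apply/eqP => /ComplexField.Normc.eq0_normc.
by move/eqP: z0.
Qed.

Lemma nc_sum (I : Type) (r : seq I) (F : I -> R[i]) :
  nc (\sum_(i <- r) F i) <= \sum_(i <- r) nc (F i).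
Proof.
elim: r => [|a r IH]; first by rewrite !big_nil ComplexField.Normc.normc0.
rewrite !big_cons; apply: le_trans (le_normcD _ _) _; by rewrite lerD2l.
Qed.

Lemma eig_vec n (M : 'M[R]_n) z : z \in eigenvalues M ->
  exists2 v : 'cV[R[i]]_n, v != 0 & map_mx (fun x : R => (x%:C)%C) M *m v = z *: v.
Proof.
move=> zin; set Mc := map_mx _ M.
have rt : root (char_poly Mc) z.
  move: zin; rewrite /eigenvalues; case: (closed_field_poly_normal _) => rs /= Hp zin.
  rewrite Hp rootZ ?root_prod_XsubC //.
  by rewrite (monicP (char_poly_monic _)) oner_eq0.
have ev : eigenvalue Mc z by rewrite eigenvalue_root_char.
have : \det (z%:M - Mc) == 0.
  case/eigenvalueP: ev => v vM v0; apply/det0P; exists v => //.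
  by rewrite mulmxBr vM mul_mx_scalar subrr.
rewrite -det_tr => /det0P [w w0 wM].
exists w^T; first by rewrite trmx_eq0.
have h : (z%:M - Mc) *m w^T = 0.
  by apply: trmx_inj; rewrite trmx_mul trmxK wM trmx0.
move/eqP: h; rewrite mulmxBl mul_scalar_mx subr_eq0 eq_sym => /eqP //.
Qed.

Lemma rho_ge n (M : 'M[R]_n) z : z \in eigenvalues M -> nc z <= spectral_radius M.
Proof. by move=> zin; rewrite /spectral_radius; apply: le_bigmax_seq. Qed.

Lemma rho_lt n (M : 'M[R]_n) (t : R) : 0 <= t -> t < 1 ->
  (forall z, z \in eigenvalues M -> nc z <= t) -> spectral_radius M < 1.
Proof.
move=> t0 t1 H; apply: le_lt_trans t1; rewrite /spectral_radius big_seq.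
by apply: bigmax_le.
Qed.

End Cplx.
Section Mx.
Context {R : realType}.

Lemma mxnn_mul m n p (A : 'M[R]_(m, n)) (B : 'M[R]_(n, p)) :
  mx_nonneg A -> mx_nonneg B -> mx_nonneg (A *m B).
Proof.
move=> hA hB i j; rewrite mxE; apply: sumr_ge0 => k _; exact: mulr_ge0.
Qed.

Lemma mx_mono n (B : 'M[R]_n) (a b : 'cV[R]_n) : mx_nonneg B ->
  (forall i, a i 0 <= b i 0) -> forall i, (B *m a) i 0 <= (B *m b) i 0.
Proof.
move=> hB hab i; rewrite !mxE; apply: ler_sum => k _; exact: ler_wpM2l.
Qed.

Lemma cw_bound n (P : 'M[R]_n) (x : 'cV[R]_n) (t : R) (u : 'cV[R[i]]_n) z :
  mx_nonneg P -> (forall i, 0 < x i 0) -> (forall i, (P *m x) i 0 <= t * x i 0) ->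
  u != 0 -> map_mx (fun x : R => (x%:C)%C) P *m u = z *: u -> nc z <= t.
Proof.
move=> hP hx hPx u0 Hu.
have [j uj] : exists j, u j 0 != 0.
  case: (pickP (fun j => u j 0 != 0)) => [j uj | h]; first by exists j.
  move/eqP: u0 => []; apply/matrixP => i k; rewrite ord1 mxE.
  by move/negbFE/eqP: (h i).
set r := fun i => nc (u i 0) / x i 0.
set c := \big[Num.max/0]_i r i.
have r0 : forall i, 0 <= r i by move=> i; rewrite /r divr_ge0 ?nc_ge0 // ltW.
have hr : forall k, nc (u k 0) <= c * x k 0.
  move=> k; rewrite -ler_pdivrMr //; exact: (le_bigmax _ r k).
have key : forall i, nc z * nc (u i 0) <= c * (t * x i 0).
  move=> i; rewrite -ComplexField.Normc.normcM.
  have -> : z * u i 0 = (map_mx (fun x : R => (x%:C)%C) P *m u) i 0 by rewrite Hu mxE.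
  rewrite mxE; apply: le_trans (nc_sum _ _ _) _.
  apply: (@le_trans _ _ (c * (P *m x) i 0)); last first.
    by rewrite ler_wpM2l // (le_trans (r0 j)) // /c; exact: (le_bigmax _ r j).
  rewrite mxE big_distrr /=; apply: ler_sum => k _.
  rewrite mxE ComplexField.Normc.normcM nc_real ger0_norm // mulrCA ler_wpM2l //.
have cE := @Order.TotalTheory.bigmax_eq_arg _ R _ (0 : R) j xpredT r isT (fun i _ => r0 i).
move: cE; set i0 := (X in _ = r X) => cE.
have rj : 0 < r j by rewrite /r divr_gt0 // nc_gt0.
have c0 : 0 < c by apply: lt_le_trans rj _; exact: (le_bigmax _ r j).
have ui0 : nc (u i0 0) = c * x i0 0.
  by rewrite /c cE /r mulfVK // gt_eqF.
have := key i0; rewrite ui0 mulrCA ler_pM2l // ler_pM2r //.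
Qed.

End Mx.
Section Pow.
Context {R : realType}.

Lemma map_pow n (M : 'M[R]_n) k :
  map_mx (fun x : R => (x%:C)%C) (M ^+ k) = (map_mx (fun x : R => (x%:C)%C) M) ^+ k.
Proof.
elim: k => [|k IH].
  by rewrite !expr0; apply/matrixP => i j; rewrite !mxE rmorph_nat.
by rewrite !exprS -IH -!mulmxE map_mxM.
Qed.

Definition cnull {m : nat} (y : nat -> 'cV[R[i]]_m) := forall i, null (fun k => nc (y k i 0)).

Lemma cnull_step m (y : nat -> 'cV[R[i]]_m) z : nc z < 1 ->
  cnull (fun k => y k.+1 - z *: y k) -> cnull y.
Proof.
move=> z1 H j.
apply: (null_rec _ _ (nc z) (nc_ge0 _) z1 (fun k => nc_ge0 _) (H j)) => k.
have -> : y k.+1 j 0 = z * y k j 0 + (y k.+1 - z *: y k) j 0.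
  by rewrite !mxE; ring.
apply: le_trans (le_normcD _ _) _.
by rewrite ComplexField.Normc.normcM.
Qed.

Lemma cnull_ext m (y y' : nat -> 'cV[R[i]]_m) : (forall k, y k = y' k) -> cnull y -> cnull y'.
Proof. by move=> E H i; apply: (null_ext _ _ _ (H i)) => k; rewrite E. Qed.

Lemma pow_null n (M : 'M[R]_n) : (forall z, z \in eigenvalues M -> nc z < 1) ->
  forall (w : 'cV[R]_n) i, null (fun k => (M ^+ k *m w) i 0).
Proof.
case: n M => [|n] M HM w i; first by case: i.
set Mc := map_mx (fun x : R => (x%:C)%C) M.
have comm_l : forall l : seq R[i], GRing.comm Mc (\prod_(z <- l) (Mc - z%:M)).
  move=> l; apply: commr_prod => z _; apply: commrB => //.
  by rewrite /GRing.comm -!mulmxE scalar_mxC.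
have I : forall s t : seq R[i], (forall z, z \in s -> nc z < 1) ->
    (forall wc, cnull (fun k => (\prod_(z <- s ++ t) (Mc - z%:M)) *m (Mc ^+ k *m wc))) ->
    forall wc, cnull (fun k => (\prod_(z <- t) (Mc - z%:M)) *m (Mc ^+ k *m wc)).
  elim=> [|z s IH] t Hs H //.
  apply: IH => [z' z's|wc]; first by apply: Hs; rewrite inE z's orbT.
  set Q := \prod_(z <- s ++ t) (Mc - z%:M).
  apply: (cnull_step _ _ z); first by apply: Hs; rewrite inE eqxx.
  apply: (cnull_ext _ _ _ _ (H wc)) => k /=.
  rewrite big_cons -/Q exprS -!mulmxE mulmxBl mul_scalar_mx !mulmxA.
  have cQ : Mc *m Q = Q *m Mc := comm_l (s ++ t).
  by rewrite !mulmxBl cQ -!scalemxAl.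
have CH : \prod_(z <- eigenvalues M) (Mc - z%:M) = 0.
  have := Cayley_Hamilton Mc; rewrite /eigenvalues.
  case: (closed_field_poly_normal _) => rs /= Hp.
  rewrite {1}Hp (monicP (char_poly_monic _)) scale1r rmorph_prod => <-.
  by apply: eq_bigr => z _; rewrite rmorphB /= horner_mx_X horner_mx_C.
have := I (eigenvalues M) [::] HM.
move/(_ _ (map_mx (fun x : R => (x%:C)%C) w)).
have H0 : forall wc, cnull (fun k => (\prod_(z <- eigenvalues M ++ [::]) (Mc - z%:M)) *m (Mc ^+ k *m wc)).
  move=> wc j; rewrite cats0 CH; apply: (null_ext _ _ _ null0) => k.
  by rewrite mul0mx mxE ComplexField.Normc.normc0.
move/(_ H0 i) => Hn.
apply: null_abs; apply: (null_ext _ _ _ Hn) => k.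
rewrite big_nil mul1mx -map_pow -map_mxM mxE nc_real //.
Qed.

End Pow.
Section Neu.
Context {R : realType}.

Lemma null_lin n (M : nat -> 'M[R]_n) (P : 'M[R]_n) :
  (forall (w : 'cV[R]_n) (i : 'I_n), null (fun k => (M k *m w) i 0)) ->
  forall (w : 'cV[R]_n) (i : 'I_n), null (fun k => ((P *m M k) *m w) i 0).
Proof.
move=> H w i.
apply: (null_ext (fun k => \sum_j P i j * (M k *m w) j 0)) => [k|].
  by rewrite -mulmxA mxE.
apply: null_sum => j; apply: nullZ; exact: H.
Qed.

Lemma null_linr n (M : nat -> 'M[R]_n) (P : 'M[R]_n) :
  (forall (w : 'cV[R]_n) (i : 'I_n), null (fun k => (M k *m w) i 0)) ->
  forall (w : 'cV[R]_n) (i : 'I_n), null (fun k => ((M k *m P) *m w) i 0).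
Proof.
move=> H w i; apply: (null_ext (fun k => (M k *m (P *m w)) i 0)) => [k|]; last exact: H.
by rewrite mulmxA.
Qed.

Lemma conj_pow n (P M : 'M[R]_n) k : P \in unitmx ->
  (P *m M *m invmx P) ^+ k = P *m M ^+ k *m invmx P.
Proof.
move=> uP; elim: k => [|k IH].
  by rewrite !expr0 mulmx1 mulmxV.
rewrite exprS IH exprS -!mulmxE !mulmxA mulmxKV //.
Qed.

Lemma neumann n (B : 'M[R]_n) : mx_nonneg B ->
  (forall (w : 'cV[R]_n) (i : 'I_n), null (fun k => (B ^+ k *m w) i 0)) ->
  (1%:M - B) \in unitmx /\ mx_nonneg (invmx (1%:M - B)).
Proof.
move=> hB HB.
have fixp : forall y : 'cV[R]_n, B *m y = y -> y = 0.
  move=> y By.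
  have Hk : forall k, B ^+ k *m y = y.
    elim=> [|k IH]; first by rewrite expr0 mul1mx.
    by rewrite exprSr -mulmxE -mulmxA By IH.
  apply/matrixP => i j; rewrite ord1 mxE; apply: null_const.
  by apply: (null_ext _ _ _ (HB y i)) => k; rewrite Hk.
have uI : (1%:M - B) \in unitmx.
  rewrite unitmxE unitfE -det_tr; apply/negP => /det0P [v v0 vB].
  have h : (1%:M - B) *m v^T = 0.
    by apply: trmx_inj; rewrite trmx_mul trmxK vB trmx0.
  move: h; rewrite mulmxBl mul1mx => /eqP; rewrite subr_eq0 eq_sym => /eqP /fixp.
  by move/eqP; rewrite trmx_eq0 (negbTE v0).
split=> // i j.
set b : 'cV[R]_n := delta_mx j 0.
set y := invmx (1%:M - B) *m b.
have -> : invmx (1%:M - B) i j = y i 0 by rewrite /y -colE mxE.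
have yE : forall k, (B *m y) k 0 = y k 0 - b k 0.
  move=> k; have : (1%:M - B) *m y = b by rewrite /y mulKVmx.
  rewrite mulmxBl mul1mx => <-; rewrite !mxE; ring.
have b0 : forall k, 0 <= b k 0 by move=> k; rewrite /b mxE ler0n.
set u : 'cV[R]_n := \col_k Num.max (- y k 0) 0.
have uB : forall k, u k 0 <= (B *m u) k 0.
  move=> k; rewrite [u k 0]mxE ge_max; apply/andP; split.
    apply: (@le_trans _ _ (- (B *m y) k 0)).
      by rewrite yE; have := b0 k; lra.
    have -> : - (B *m y) k 0 = (B *m (- y)) k 0 by rewrite mulmxN !mxE.
    apply: mx_mono => // l; rewrite !mxE le_max lexx //.
  by rewrite mxE; apply: sumr_ge0 => l _; rewrite mxE mulr_ge0 // le_max lexx orbT.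
have uk : forall k l, u l 0 <= (B ^+ k *m u) l 0.
  elim=> [|k IH] l; first by rewrite expr0 mul1mx.
  rewrite exprS -mulmxE -mulmxA; apply: le_trans (uB l) _.
  exact: mx_mono.
have : u i 0 <= 0 by apply: (null_lb _ _ (HB u i)) => k; exact: uk.
by rewrite mxE ge_max lerNl oppr0 => /andP[].
Qed.

End Neu.
Section Main.
Context {R : realType}.

Lemma tele n (K : 'M[R]_n) s :
  (\sum_(j < s) K ^+ j) *m (1%:M - K) = 1%:M - K ^+ s.
Proof.
elim: s => [|s IH]; first by rewrite big_ord0 mul0mx expr0 subrr.
have -> : K ^+ s.+1 = K ^+ s *m K by rewrite exprSr.
rewrite big_ord_recr /= mulmxDl IH mulmxBr mulmx1.
by rewrite addrA subrK.
Qed.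

Lemma mxnn_pow n (K : 'M[R]_n) k : mx_nonneg K -> mx_nonneg (K ^+ k).
Proof.
move=> hK; elim: k => [|k IH]; first by move=> i j; rewrite expr0 mxE ler0n.
by rewrite exprS; apply: mxnn_mul.
Qed.

Lemma mxnn_add m n (A B : 'M[R]_(m, n)) : mx_nonneg A -> mx_nonneg B -> mx_nonneg (A + B).
Proof. by move=> hA hB i j; rewrite mxE addr_ge0. Qed.

Lemma mxnn_sum m n s (A : 'I_s -> 'M[R]_(m, n)) : (forall j, mx_nonneg (A j)) ->
  mx_nonneg (\sum_(j < s) A j).
Proof. by move=> h i k; rewrite summxE; apply: sumr_ge0 => j _; exact: h. Qed.

Lemma eig_lt n (M : 'M[R]_n) : spectral_radius M < 1 ->
  forall z, z \in eigenvalues M -> nc z < 1.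
Proof. by move=> h z zin; apply: le_lt_trans h; exact: rho_ge. Qed.

End Main.

Theorem corollary3p4 (R : realType) (n : nat) (A U V F G : 'M[R]_n) :
  A \in unitmx ->
  regular_splitting A U V -> convergent_splitting U V ->
  weak_regular_splitting_II U F G -> convergent_splitting F G ->
  V *m invmx F *m G = G *m invmx F *m V ->
  forall s : nat, (0 < s)%N ->
    spectral_radius (two_stage_T V F G s) < 1 /\
    (forall (b x0 : 'cV[R]_n) (i : 'I_n),
       (fun k : nat => (two_stage_iter V F G s b x0 k i 0 : R)) @ \oo --> ((invmx A *m b) i 0 : R)).
Proof.
move=> uA [AE uU hUi hV] cUV [UE uF hFi hGF] cFG _ s s0.
set Fi := invmx F.
set H := Fi *m G.
set K := G *m Fi.
set W := V *m Fi.
set M := invmx U *m V.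
have Hnull := pow_null _ H (eig_lt _ _ cFG).
have Mnull := pow_null _ M (eig_lt _ _ cUV).
have KF : K *m F = G by rewrite /K mulmxKV.
have KE : K = F *m H *m Fi by rewrite /H mulKVmx.
have Knull : forall (w : 'cV[R]_n) (i : 'I_n), null (fun k => (K ^+ k *m w) i 0).
  move=> w i; apply: (null_ext (fun k => ((F *m H ^+ k) *m Fi *m w) i 0)) => [k|].
    by rewrite KE conj_pow.
  exact: (null_linr _ _ _ (null_lin _ _ _ Hnull)).
have [uIK hIK] := neumann _ _ hGF Knull.
have hW : mx_nonneg W := mxnn_mul _ _ _ _ _ hV hFi.
set B1 := invmx (1%:M - K) *m W.
have hB1 : mx_nonneg B1 := mxnn_mul _ _ _ _ _ hIK hW.
have UE' : (1%:M - K) *m F = U by rewrite mulmxBl mul1mx KF UE.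
have IKE : invmx (1%:M - K) = F *m invmx U.
  rewrite -[RHS](mulKmx uIK) [(1%:M - K) *m _]mulmxA UE' mulmxV // mulmx1 //.
have B1E : B1 = F *m M *m Fi by rewrite /B1 IKE /M /W !mulmxA.
have B1null : forall (w : 'cV[R]_n) (i : 'I_n), null (fun k => (B1 ^+ k *m w) i 0).
  move=> w i; apply: (null_ext (fun k => ((F *m M ^+ k) *m Fi *m w) i 0)) => [k|].
    by rewrite B1E conj_pow.
  exact: (null_linr _ _ _ (null_lin _ _ _ Mnull)).
have [uIB hIB] := neumann _ _ hB1 B1null.
set ones : 'cV[R]_n := const_mx 1.
have hones : mx_nonneg ones by move=> i j; rewrite mxE ler01.
set zv := invmx (1%:M - K) *m ones.
set xv := invmx (1%:M - B1) *m zv.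
have hz : mx_nonneg zv := mxnn_mul _ _ _ _ _ hIK hones.
have hx : mx_nonneg xv := mxnn_mul _ _ _ _ _ hIB hz.
have zE : zv = ones + K *m zv.
  have : (1%:M - K) *m zv = ones by rewrite /zv mulKVmx.
  by rewrite mulmxBl mul1mx => <-; rewrite subrK.
have xE : xv = zv + B1 *m xv.
  have : (1%:M - B1) *m xv = zv by rewrite /xv mulKVmx.
  by rewrite mulmxBl mul1mx => <-; rewrite subrK.
have x1 : forall i, 1 <= xv i 0.
  move=> i.
  have e1 : xv i 0 = zv i 0 + (B1 *m xv) i 0 by rewrite {1}xE mxE.
  have e2 : zv i 0 = 1 + (K *m zv) i 0 by rewrite {1}zE mxE [ones i 0]mxE.
  have h1 : 0 <= (B1 *m xv) i 0 by apply: mxnn_mul.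
  have h2 : 0 <= (K *m zv) i 0 by apply: mxnn_mul.
  rewrite e1 e2; lra.
have Wx : W *m xv = (1%:M - K) *m xv - ones.
  rewrite {2}xE mulmxDr /zv mulKVmx // /B1 -mulmxA mulKVmx //.
  by rewrite [RHS]addrC addKr.
set T' := K ^+ s + \sum_(j < s) K ^+ j *m W.
set S := \sum_(j < s) K ^+ j.
have hT' : mx_nonneg T'.
  apply: mxnn_add; first exact: mxnn_pow.
  by apply: mxnn_sum => j; apply: mxnn_mul => //; exact: mxnn_pow.
have TE : T' *m xv = xv - S *m ones.
  rewrite /T' mulmxDl mulmx_suml.
  have -> : \sum_(j < s) (K ^+ j *m W *m xv) = S *m (W *m xv).
    by rewrite /S mulmx_suml; apply: eq_bigr => j _; rewrite mulmxA.
  rewrite Wx mulmxBr mulmxA tele mulmxBl mul1mx.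
  by rewrite addrA addrCA subrr addr0.
have S1 : forall i, 1 <= (S *m ones) i 0.
  move=> i; have [s' es] : exists s', s = s'.+1 by case: (s) s0 => // s' _; exists s'.
  rewrite /S es mulmx_suml summxE big_ord_recl /= expr0 mul1mx [ones i 0]mxE lerDl.
  by apply: sumr_ge0 => j _; apply: mxnn_mul => //; exact: mxnn_pow.
set mx := \big[Num.max/1]_i xv i 0.
have mx1 : 1 <= mx.
  by rewrite /mx; elim/big_ind: _ => // a b' ha hb; rewrite le_max ha.
have mx0 : 0 < mx by apply: lt_le_trans mx1.
set t := 1 - mx^-1.
have t0 : 0 <= t by rewrite /t subr_ge0 invr_le1 // unitfE gt_eqF.
have t1 : t < 1 by rewrite /t ltrBlDr ltrDl invr_gt0.
have xpos : forall i, 0 < xv i 0 by move=> i; apply: lt_le_trans (x1 i).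
have Tb : forall i, (T' *m xv) i 0 <= t * xv i 0.
  move=> i.
  have e : (T' *m xv) i 0 = xv i 0 - (S *m ones) i 0 by rewrite TE !mxE.
  have hxm : xv i 0 / mx <= 1.
    by rewrite ler_pdivrMr // mul1r /mx; exact: (le_bigmax _ (fun i => xv i 0) i).
  have hS := S1 i.
  have et : t * xv i 0 = xv i 0 - xv i 0 / mx by rewrite /t mulrBl mul1r mulrC.
  rewrite e et; move: hxm hS; set q := xv i 0 / mx; set X := (S *m ones) i 0.
  lra.
set T := two_stage_T V F G s.
have FH : forall j, F *m H ^+ j = K ^+ j *m F.
  elim=> [|j IH]; first by rewrite !expr0 mulmx1 mul1mx.
  have -> : H ^+ j.+1 = H ^+ j *m H by rewrite exprSr.
  have -> : K ^+ j.+1 = K ^+ j *m K by rewrite exprSr.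
  by rewrite mulmxA IH -!mulmxA /H /Fi mulKVmx // mulVmx // mulmx1.
have TF : T' *m F = F *m T.
  rewrite /T /two_stage_T /T' mulmxDl mulmxDr FH mulmx_suml mulmx_sumr.
  congr (_ + _); apply: eq_bigr => j _.
  by rewrite -!mulmxA /Fi mulVmx // mulmx1 mulmxA -/Fi -/H !mulmxA FH /Fi mulmxK.
have eigT : forall z, z \in eigenvalues T -> nc z <= t.
  move=> z zin; have [v v0 Tv] := eig_vec _ _ _ zin.
  set Fc := map_mx (fun x : R => (x%:C)%C) F.
  have uFc : Fc \in unitmx by rewrite map_unitmx.
  apply: (cw_bound _ _ _ _ (Fc *m v) z hT' xpos Tb).
    apply: contraNneq v0 => h; by rewrite -(mulKmx uFc v) h mulmx0.
  rewrite mulmxA -map_mxM TF map_mxM -mulmxA Tv.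
  by rewrite -scalemxAr.
split; first exact: (rho_lt _ _ _ t0 t1 eigT).
have Tnull := pow_null _ T (fun z zin => le_lt_trans (eigT z zin) t1).
move=> b x0 i.
set xs := invmx A *m b.
set c := two_stage_c F G s b.
have FiU : Fi *m U = 1%:M - H by rewrite UE mulmxBr mulVmx.
have fixE : T *m xs + c = xs.
  have bE : b = U *m xs - V *m xs by rewrite -mulmxBl -AE mulKVmx.
  rewrite /T /two_stage_T /c /two_stage_c mulmxDl mulmx_suml -addrA.
  rewrite bE -big_split /=.
  have -> : \sum_(j < s) (H ^+ j *m Fi *m V *m xs + H ^+ j *m Fi *m (U *m xs - V *m xs))
      = (\sum_(j < s) H ^+ j) *m (1%:M - H) *m xs.
    rewrite !mulmx_suml; apply: eq_bigr => j _.
    by rewrite -FiU mulmxBr !mulmxA addrC subrK.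
  by rewrite tele mulmxBl mul1mx addrC subrK.
have iterE : forall k, two_stage_iter V F G s b x0 k - xs = T ^+ k *m (x0 - xs).
  elim=> [|k IH]; first by rewrite expr0 mul1mx.
  rewrite /= -{1}fixE -/T -/c opprD addrACA subrr addr0 -mulmxBr IH.
  rewrite exprS; exact: mulmxA.
apply: null_cvg; apply: (null_ext (fun k => (T ^+ k *m (x0 - xs)) i 0)) => [k|].
  by rewrite -iterE !mxE.
exact: Tnull.
Qed.
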